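(* For any step size $\eta\ge0$ and any iteration $i$, \[ \eta(1-\eta\rho^2/8)\|\nabla\widehat{\mathcal R}(W_i)\|^2\le\widehat{\mathcal R}^{(i)}(W_i)-\widehat{\mathcal R}^{(i)}(W_{i+1}). \] If $\eta\le8/\rho^2$ then $\widehat{\mathcal R}^{(i)}(W_{i+1})\le\widehat{\mathcal R}^{(i)}(W_i)$, and if $\eta\le4/\rho^2$ then $\frac\eta2\|\nabla\widehat{\mathcal R}(W_i)\|^2\le\widehat{\mathcal R}^{(i)}(W_i)-\widehat{\mathcal R}^{(i)}(W_{i+1})$.
   Context: Sample $((x_k,y_k))_{k=1}^n$ with $\|x_k\|\le1$, $y_k\in\{\pm1\}$. $\ell(r)=\ln(1+e^{-r})$. Network of width $m$, temperature $\rho>0$, signs $a_j\in\{\pm1\}$: for $W$ with rows $w_j^\top$, $f(x;W)=\frac{\rho}{\sqrt m}\sum_ja_j\max\{0,w_j^\top x\}$, $\nabla f(x;W)=\frac{\rho}{\sqrt m}\sum_ja_j\mathbf 1[w_j^\top x\ge0]e_jx^\top$. $\widehat{\mathcal R}(W)=\frac1n\sum_k\ell(y_kf(x_k;W))$ and $\nabla\widehat{\mathcal R}(W)=\frac1n\sum_k\ell'(y_kf(x_k;W))y_k\nabla f(x_k;W)$. Gradient descent from $W_0$: $W_{i+1}=W_i-\eta\nabla\widehat{\mathcal R}(W_i)$. Features at time $i$: $\widehat{\mathcal R}^{(i)}(V)=\frac1n\sum_k\ell(y_k\langle\nabla f(x_k;W_i),V\rangle)$, $\langle A,B\rangle=\mathrm{tr}(A^\top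 B)$. $\|\cdot\|$ Frobenius norm. *)

(* Defs.v *)
From HB Require Import structures.
From mathcomp Require Import all_boot all_order all_algebra.
From mathcomp Require Import all_classical all_reals all_analysis.
Set Implicit Arguments. Unset Strict Implicit. Unset Printing Implicit Defensive.
Import Order.TTheory GRing.Theory Num.Theory.
Local Open Scope ring_scope.

Definition ell (R : realType) (r : R) : R := ln (1 + expR (- r)).

Definition ell' (R : realType) (r : R) : R := derive1 (@ell R) r.

Definition fnet (R : realType) (m d : nat) (rho : R) (a : 'I_m -> R)
  (W : 'M[R]_(m, d)) (x : 'cV[R]_d) : R :=
  rho / Num.sqrt (m%:R) * \sum_(j < m) a j * Num.max 0 ((row j W *m x) 0 0).

Definition gradf (R : realType) (m d : nat) (rho : R) (a : 'I_m -> R)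
  (W : 'M[R]_(m, d)) (x : 'cV[R]_d) : 'M[R]_(m, d) :=
  (rho / Num.sqrt (m%:R)) *:
    \sum_(j < m) (a j * (if 0 <= (row j W *m x) 0 0 then 1 else 0))
                   *: (delta_mx j (0 : 'I_1) *m x^T).

Definition frob_inner (R : realType) (m d : nat) (A B : 'M[R]_(m, d)) : R :=
  \tr (A^T *m B).
Definition frob_norm (R : realType) (m d : nat) (A : 'M[R]_(m, d)) : R :=
  Num.sqrt (\sum_(i < m) \sum_(j < d) A i j ^+ 2).

Definition riskhat (R : realType) (m d n : nat) (rho : R) (a : 'I_m -> R)
  (X : 'I_n -> 'cV[R]_d) (Y : 'I_n -> R) (W : 'M[R]_(m, d)) : R :=
  n%:R^-1 * \sum_(k < n) ell (Y k * fnet rho a W (X k)).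

Definition grad_riskhat (R : realType) (m d n : nat) (rho : R) (a : 'I_m -> R)
  (X : 'I_n -> 'cV[R]_d) (Y : 'I_n -> R) (W : 'M[R]_(m, d)) : 'M[R]_(m, d) :=
  n%:R^-1 *: \sum_(k < n) (ell' (Y k * fnet rho a W (X k)) * Y k)
                            *: gradf rho a W (X k).

Definition gd (R : realType) (m d n : nat) (rho : R) (a : 'I_m -> R)
  (X : 'I_n -> 'cV[R]_d) (Y : 'I_n -> R) (eta : R) (W0 : 'M[R]_(m, d))
  (i : nat) : 'M[R]_(m, d) :=
  iter i (fun W => W - eta *: grad_riskhat rho a X Y W) W0.

Definition feat_risk (R : realType) (m d n : nat) (rho : R) (a : 'I_m -> R)
  (X : 'I_n -> 'cV[R]_d) (Y : 'I_n -> R) (Wi V : 'M[R]_(m, d)) : R :=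
  n%:R^-1 * \sum_(k < n) ell (Y k * frob_inner (gradf rho a Wi (X k)) V).

(* Main.v *)
Require Import Defs.
From HB Require Import structures.
From mathcomp Require Import all_boot all_order all_algebra.
From mathcomp Require Import all_classical all_reals all_analysis.
From mathcomp Require Import ring lra.
Import Order.TTheory GRing.Theory Num.Theory.
Local Open Scope ring_scope.

Section An.
Variable R : realType.

Definition sg (u : R) : R := (1 + expR u)^-1.

Lemma onepE (u : R) : 0 < 1 + expR u.
Proof. by rewrite ltr_wpDr ?expR_ge0. Qed.

Lemma ell_is_derive (r : R) : is_derive r 1 (@ell R) (- sg r).
Proof.
have h0 : is_derive r 1 (fun r : R => expR (- r)) (expR (- r) * (-1)).
  exact: (@is_derive1_comp R expR (fun r => - r)).
have h1 : is_derive r 1 (fun r : R => 1 + expR (- r)) (0 + expR (- r) * (-1)).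
  exact: (@is_deriveD R R R (cst 1) (fun r : R => expR (- r))).
have h2 := @is_derive1_comp R (@ln R) (fun r : R => 1 + expR (- r)) r _ _ (is_derive1_ln (onepE (- r))) h1.
apply: is_derive_eq h2 _.
rewrite /sg expRN add0r.
have e0 : expR r != 0 by rewrite gt_eqF // expR_gt0.
have e1 : 1 + expR r != 0 by rewrite gt_eqF // onepE.
have e2 : 1 + (expR r)^-1 != 0 by rewrite -expRN gt_eqF // onepE.
field.
by rewrite e0 e1.
Qed.


Lemma mono_le (f df : R -> R) (a b : R) : a <= b ->
  (forall x : R, is_derive x 1 f (df x)) ->
  (forall z, a <= z -> z <= b -> df z <= 0) -> f b <= f a.
Proof.
move=> ab hd hn.
have dv : forall x : R, derivable f x 1 by move=> x; case: (hd x).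
apply: (@ler0_derive1_nincr R f a b) => //.
- move=> x; rewrite in_itv /= => /andP[ax xb].
  by rewrite derive1E (@derive_val _ _ _ _ _ _ _ (hd x)); apply: hn; apply: ltW.
- by apply: derivable_within_continuous => x _; exact: dv.
Qed.

Lemma mono_ge (f df : R -> R) (a b : R) : a <= b ->
  (forall x : R, is_derive x 1 f (df x)) ->
  (forall z, a <= z -> z <= b -> 0 <= df z) -> f a <= f b.
Proof.
move=> ab hd hn.
have dv : forall x : R, derivable f x 1 by move=> x; case: (hd x).
apply: (@ger0_derive1_ndecr R f a b) => //.
- move=> x; rewrite in_itv /= => /andP[ax xb].
  by rewrite derive1E (@derive_val _ _ _ _ _ _ _ (hd x)); apply: hn; apply: ltW.
- by apply: derivable_within_continuous => x _; exact: dv.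
Qed.

Lemma sg_is_derive (u : R) : is_derive u 1 sg (- (1 + expR u) ^- 2 * (0 + expR u)).
Proof.
apply: (@is_deriveV R (fun u => 1 + expR u)).
by rewrite gt_eqF // onepE.
Qed.


Lemma shift_is_derive (r t : R) : is_derive t 1 (fun t : R => r + t) (0 + 1).
Proof. exact: (@is_deriveD R R R (cst r) id). Qed.

Definition Kf (r t : R) : R := sg r - sg (r + t) - t / 4.

Lemma Kf_is_derive (r t : R) : is_derive t 1 (Kf r)
   (0 - (- (1 + expR (r + t)) ^- 2 * (0 + expR (r + t))) * (0 + 1) - 1 / 4).
Proof.
have h1 := @is_derive1_comp R sg (fun t => r + t) t _ _ (sg_is_derive (r + t)) (shift_is_derive r t).
have h2 : is_derive t 1 (fun t : R => t / 4) (1 / 4).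
  have h := @is_deriveM R R (fun s : R => s) (cst (4^-1 : R)) t 1 1 0 (is_derive_id t 1) (is_derive_cst (4^-1 : R) t 1).
  apply: is_derive_eq h _.
  by rewrite /GRing.scale /= mulr0 add0r mulr1 div1r.
have h3 : is_derive t 1 (fun t : R => sg r - sg (r + t)) (0 - (- (1 + expR (r + t)) ^- 2 * (0 + expR (r + t))) * (0 + 1)) :=
  @is_deriveB R R R (cst (sg r)) (sg \o (fun t => r + t)) t 1 _ _ (is_derive_cst (sg r) t 1) h1.
have h4 := @is_deriveB R R R (fun t : R => sg r - sg (r + t)) (fun t : R => t / 4) t 1 _ _ h3 h2.
exact: is_derive_eq h4 _.
Qed.


Lemma Kf_dle0 (r t : R) :
  0 - (- (1 + expR (r + t)) ^- 2 * (0 + expR (r + t))) * (0 + 1) - 1 / 4 <= 0.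
Proof.
set E := expR (r + t).
have E0 : 0 < E by apply: expR_gt0.
have P : 0 < (1 + E) ^+ 2 by apply: exprn_gt0; apply: onepE.
have q1 : (1 + E) ^- 2 * (1 + E) ^+ 2 = 1 by rewrite mulVf // gt_eqF.
have q0 : 0 <= (1 + E) ^- 2 by rewrite invr_ge0 ltW.
have hh := mulr_ge0 q0 (sqr_ge0 (1 - E)).
move: q1 q0 hh; set q := (1 + E) ^- 2 => q1 q0 hh.
nra.
Qed.

Lemma Kf_mono (r z1 z2 : R) : z1 <= z2 -> Kf r z2 <= Kf r z1.
Proof.
move=> h.
apply: (@mono_le (Kf r) (fun t => 0 - (- (1 + expR (r + t)) ^- 2 * (0 + expR (r + t))) * (0 + 1) - 1 / 4) z1 z2 h (Kf_is_derive r)) => z _ _.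
exact: Kf_dle0.
Qed.

Definition Hf (r t : R) : R := ell (r + t) - ell r + sg r * t - t ^+ 2 / 8.

Lemma Hf_is_derive (r t : R) : is_derive t 1 (Hf r) (Kf r t).
Proof.
have a1 := @is_derive1_comp R (@ell R) (fun t => r + t) t _ _ (ell_is_derive (r + t)) (shift_is_derive r t).
have a2 := is_derive_cst (ell r) t 1.
have a3 := @is_deriveM R R (cst (sg r)) (fun s : R => s) t 1 0 1 (is_derive_cst (sg r) t 1) (is_derive_id t 1).
have a4' := @is_deriveX R R (fun s : R => s) 2 t 1 1 (is_derive_id t 1).
have a4 := @is_deriveM R R (fun s : R => s ^+ 2) (cst (8^-1 : R)) t 1 _ 0 a4' (is_derive_cst (8^-1 : R) t 1).
have hA := @is_deriveB R R R (@ell R \o (fun t => r + t)) (cst (ell r)) t 1 _ _ a1 a2.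
have hB := @is_deriveD R R R _ _ t 1 _ _ hA a3.
have hC := @is_deriveB R R R _ _ t 1 _ _ hB a4.
apply: is_derive_eq hC _.
rewrite /Kf /sg /GRing.scale /=.
rewrite expr1; field.
by rewrite !gt_eqF ?onepE.
Qed.

Lemma ell_bound (r t : R) : ell (r + t) <= ell r - sg r * t + t ^+ 2 / 8.
Proof.
suff : Hf r t <= Hf r 0.
  rewrite /Hf !addr0 subrr mulr0 expr0n /= mul0r subr0 => h.
lra.
have dH := Hf_is_derive r.
case: (lerP 0 t) => t0.
  apply: (@mono_le (Hf r) (Kf r) 0 t t0 dH) => z z0 _.
  have := @Kf_mono r _ _ z0; rewrite /Kf addr0 subrr mul0r subr0 //.
apply: (@mono_ge (Hf r) (Kf r) t 0 (ltW t0) dH) => z _ z0.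
have := @Kf_mono r _ _ z0; rewrite /Kf addr0 subrr mul0r subr0 //.
Qed.


Lemma ell'E (r : R) : ell' r = - sg r.
Proof. unfold ell'. rewrite derive1E. exact: (@derive_val _ _ _ _ _ _ _ (ell_is_derive r)). Qed.

Lemma frob_innerE m d (A B : 'M[R]_(m, d)) :
  frob_inner A B = \sum_(i < m) \sum_(j < d) A i j * B i j.
Proof.
rewrite /frob_inner /mxtrace exchange_big /=; apply: eq_bigr => j _.
by rewrite !mxE; apply: eq_bigr => i _; rewrite mxE.
Qed.

Lemma frob_normE m d (A : 'M[R]_(m, d)) :
  frob_norm A ^+ 2 = \sum_(i < m) \sum_(j < d) A i j ^+ 2.
Proof.
rewrite /frob_norm sqr_sqrtr //; apply: sumr_ge0 => i _; apply: sumr_ge0 => j _.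
exact: sqr_ge0.
Qed.

Lemma gradfE m d rho (a : 'I_m -> R) (W : 'M[R]_(m, d)) x i l :
  gradf rho a W x i l = rho / Num.sqrt (m%:R) *
    (a i * (if 0 <= (row i W *m x) 0 0 then 1 else 0)) * x l 0.
Proof.
rewrite /gradf mxE summxE (bigD1 i) //= big1 ?addr0.
  rewrite !mxE big_ord1 !mxE !eqxx /=.
  by rewrite mul1r mulrA.
move=> j ji; rewrite !mxE big_ord1 !mxE.
by rewrite eq_sym (negbTE ji) /= mul0r mulr0.
Qed.


Lemma inner_suml m d n (F : 'I_n -> 'M[R]_(m, d)) B :
  frob_inner (\sum_(k < n) F k) B = \sum_(k < n) frob_inner (F k) B.
Proof.
rewrite frob_innerE.
under eq_bigr => i _ do under eq_bigr => j _ do rewrite summxE mulr_suml.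
under eq_bigr => i _ do rewrite exchange_big.
rewrite exchange_big; apply: eq_bigr => k _; rewrite frob_innerE.
by apply: eq_bigr => i _; apply: eq_bigr => j _.
Qed.

Lemma inner_scalel m d s (A B : 'M[R]_(m, d)) :
  frob_inner (s *: A) B = s * frob_inner A B.
Proof.
rewrite !frob_innerE mulr_sumr; apply: eq_bigr => i _; rewrite mulr_sumr.
by apply: eq_bigr => j _; rewrite mxE mulrA.
Qed.

Lemma inner_subr m d s (A B C : 'M[R]_(m, d)) :
  frob_inner A (B - s *: C) = frob_inner A B - s * frob_inner A C.
Proof.
rewrite !frob_innerE mulr_sumr -sumrB; apply: eq_bigr => i _; rewrite mulr_sumr -sumrB.
by apply: eq_bigr => j _; rewrite !mxE; ring.
Qed.

Lemma inner_gradf m d rho (a : 'I_m -> R) (W : 'M[R]_(m, d)) x :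
  frob_inner (gradf rho a W x) W = fnet rho a W x.
Proof.
rewrite frob_innerE /fnet mulr_sumr; apply: eq_bigr => i _.
have hz : (row i W *m x) 0 0 = \sum_(l < d) W i l * x l 0.
  by rewrite !mxE; apply: eq_bigr => l _; rewrite mxE.
under eq_bigr => l _ do rewrite gradfE -mulrA.
rewrite -mulr_sumr -mulrA; congr (_ * _).
rewrite -mulrA; congr (_ * _).
case: (lerP 0 ((row i W *m x) 0 0)) => h.
  by rewrite mul1r hz; apply: eq_bigr => l _; rewrite mulrC.
by rewrite mul0r.
Qed.


Lemma CS (I : finType) (u v : I -> R) :
  (\sum_i u i * v i) ^+ 2 <= (\sum_i u i ^+ 2) * (\sum_i v i ^+ 2).
Proof.
set A := \sum_i u i ^+ 2; set B := \sum_i v i ^+ 2; set C := \sum_i u i * v i.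
have eAB : A * B = \sum_i \sum_j u i ^+ 2 * v j ^+ 2.
  by rewrite /A mulr_suml; apply: eq_bigr => i _; rewrite mulr_sumr.
have eBA : B * A = \sum_i \sum_j v i ^+ 2 * u j ^+ 2.
  by rewrite /B mulr_suml; apply: eq_bigr => i _; rewrite mulr_sumr.
have eCC : C * C = \sum_i \sum_j (u i * v i) * (u j * v j).
  by rewrite /C mulr_suml; apply: eq_bigr => i _; rewrite mulr_sumr.
have h : 0 <= \sum_i \sum_j (u i ^+ 2 * v j ^+ 2 + v i ^+ 2 * u j ^+ 2
                              - 2 * ((u i * v i) * (u j * v j))).
  apply: sumr_ge0 => i _; apply: sumr_ge0 => j _.
  have -> : u i ^+ 2 * v j ^+ 2 + v i ^+ 2 * u j ^+ 2 - 2 * ((u i * v i) * (u j * v j))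
     = (u i * v j - u j * v i) ^+ 2 by ring.
  exact: sqr_ge0.
have e : \sum_i \sum_j (u i ^+ 2 * v j ^+ 2 + v i ^+ 2 * u j ^+ 2
                              - 2 * ((u i * v i) * (u j * v j))) = A * B + B * A - 2 * (C * C).
  under eq_bigr => i _ do rewrite sumrB big_split /=.
  rewrite sumrB big_split /= -eAB -eBA eCC; congr (_ - _).
  by rewrite mulr_sumr; apply: eq_bigr => i _; rewrite mulr_sumr.
rewrite e in h.
rewrite expr2; nra.
Qed.

Lemma CS2 m d (F G : 'I_m -> 'I_d -> R) :
  (\sum_(i < m) \sum_(j < d) F i j * G i j) ^+ 2 <=
  (\sum_(i < m) \sum_(j < d) F i j ^+ 2) * (\sum_(i < m) \sum_(j < d) G i j ^+ 2).
Proof.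
rewrite !pair_big /=.
exact: (CS _ (fun p => F p.1 p.2) (fun p => G p.1 p.2)).
Qed.


Lemma gradf_norm m d rho (a : 'I_m -> R) (W : 'M[R]_(m, d)) (x : 'cV[R]_d) :
  (0 < m)%N -> (forall j, a j = 1 \/ a j = -1) ->
  \sum_(l < d) (x l 0) ^+ 2 <= 1 ->
  \sum_(i < m) \sum_(l < d) gradf rho a W x i l ^+ 2 <= rho ^+ 2.
Proof.
move=> m0 ha hx.
set c := rho / Num.sqrt (m%:R).
have hc : c ^+ 2 * m%:R = rho ^+ 2.
  rewrite /c exprMn exprVn sqr_sqrtr ?ler0n // -mulrA mulVf ?mulr1 //.
  by rewrite pnatr_eq0 -lt0n.
apply: (@le_trans _ _ (\sum_(i < m) c ^+ 2)).
  apply: ler_sum => i _.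
  pose b := a i * (if 0 <= (row i W *m x) 0 0 then 1 else 0).
  have hb : b ^+ 2 <= 1.
    rewrite /b; case: ifP => _; case: (ha i) => ->; rewrite ?mulr1 ?mulr0; lra.
  under eq_bigr => l _ do rewrite gradfE -/c exprMn exprMn -mulrA.
  rewrite -mulr_sumr -[leRHS]mulr1 ler_wpM2l ?sqr_ge0 //.
  rewrite -mulr_sumr -[leRHS]mulr1 ler_pM ?sqr_ge0 //.
  by apply: sumr_ge0 => l _; exact: sqr_ge0.
by rewrite sumr_const card_ord -mulr_natr hc.
Qed.


End An.

Theorem lemmaA9 (R : realType) (m d n : nat) (rho : R) (a : 'I_m -> R)
  (X : 'I_n -> 'cV[R]_d) (Y : 'I_n -> R) (W0 : 'M[R]_(m, d)) (eta : R) (i : nat) :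
  (0 < m)%N -> (0 < n)%N -> 0 < rho ->
  (forall j, a j = 1 \/ a j = -1) ->
  (forall k, \sum_(l < d) (X k l 0) ^+ 2 <= 1) ->
  (forall k, Y k = 1 \/ Y k = -1) ->
  0 <= eta ->
  let Wi := gd rho a X Y eta W0 i in
  let Wi1 := gd rho a X Y eta W0 i.+1 in
  let g := grad_riskhat rho a X Y Wi in
  let Ri := feat_risk rho a X Y Wi in
  [/\ eta * (1 - eta * rho ^+ 2 / 8) * frob_norm g ^+ 2 <= Ri Wi - Ri Wi1,
      (eta <= 8 / rho ^+ 2 -> Ri Wi1 <= Ri Wi)
    & (eta <= 4 / rho ^+ 2 -> eta / 2 * frob_norm g ^+ 2 <= Ri Wi - Ri Wi1)].
Proof.
move=> m0 n0 rho0 ha hx hy eta0 Wi Wi1 g Ri.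
pose G k := gradf rho a Wi (X k).
pose r k := Y k * fnet rho a Wi (X k).
pose u k := frob_inner (G k) g.
pose N := frob_norm g ^+ 2.
pose P := (n%:R : R)^-1.
have Pn : P * n%:R = 1 by rewrite mulVf // pnatr_eq0 -lt0n.
have N0 : 0 <= N by rewrite /N sqr_ge0.
have eW : Wi1 = Wi - eta *: g by [].
have eR1 : Ri Wi1 = P * \sum_(k < n) ell (r k + - (eta * (Y k * u k))).
  rewrite /Ri /feat_risk eW; congr (_ * _); apply: eq_bigr => k _.
  by rewrite inner_subr inner_gradf /r /u /G; congr ell; ring.
have eR0 : Ri Wi = P * \sum_(k < n) ell (r k).
  rewrite /Ri /feat_risk; congr (_ * _); apply: eq_bigr => k _.
  by rewrite inner_gradf.
have eN : N = P * \sum_(k < n) (ell' (r k) * Y k) * u k.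
  have -> : N = frob_inner g g.
    rewrite /N frob_normE frob_innerE; apply: eq_bigr => i0 _.
    by apply: eq_bigr => j _; rewrite expr2.
  rewrite {1}/g /grad_riskhat inner_scalel inner_suml; congr (_ * _).
  by apply: eq_bigr => k _; rewrite inner_scalel.
have hu : forall k, u k ^+ 2 <= rho ^+ 2 * N.
  move=> k; rewrite /u frob_innerE /N frob_normE.
  apply: le_trans; first exact: CS2.
  apply: ler_wpM2r; first by apply: sumr_ge0 => i0 _; apply: sumr_ge0 => j _; exact: sqr_ge0.
  exact: gradf_norm.
pose K := eta ^+ 2 * rho ^+ 2 * N / 8.
have key : forall k, ell (r k + - (eta * (Y k * u k))) <=
    ell (r k) - eta * ((ell' (r k) * Y k) * u k) + K.
  move=> k; apply: le_trans; first exact: ell_bound.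
  rewrite ell'E.
  have hY : Y k ^+ 2 = 1 by case: (hy k) => ->; rewrite ?expr1n ?sqrrN ?expr1n.
  have e2 : (- (eta * (Y k * u k))) ^+ 2 = eta ^+ 2 * u k ^+ 2.
    by rewrite sqrrN !exprMn hY mul1r.
  rewrite e2 /K.
  have := hu k; have := sqr_ge0 eta.
  move: (eta ^+ 2) (u k ^+ 2) => e u2 he hu2.
  have h := ler_wpM2l he hu2.
  set s := sg R (r k); set y := Y k; set uk := u k; set ek := ell (r k).
  nra.
have S : \sum_(k < n) ell (r k + - (eta * (Y k * u k))) <=
    \sum_(k < n) ell (r k) - eta * \sum_(k < n) ((ell' (r k) * Y k) * u k) + n%:R * K.
  apply: le_trans; first by apply: ler_sum => k _; exact: key.
  rewrite big_split sumrB /= sumr_const card_ord -mulr_sumr mulr_natl.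
  by [].
have C1 : eta * (1 - eta * rho ^+ 2 / 8) * N <= Ri Wi - Ri Wi1.
  have P0 : 0 <= P by rewrite /P invr_ge0 ler0n.
  have := ler_wpM2l P0 S.
  rewrite eR1 eR0.
  have -> : P * (\sum_(k < n) ell (r k) - eta * \sum_(k < n) ((ell' (r k) * Y k) * u k) + n%:R * K)
     = P * \sum_(k < n) ell (r k) - eta * N + K.
    rewrite eN mulrDr mulrBr (mulrA P n%:R) Pn mul1r; ring.
  rewrite /K; move: (P * _) (P * _) => A B h.
  have -> : eta * (1 - eta * rho ^+ 2 / 8) * N = eta * N - eta ^+ 2 * rho ^+ 2 * N / 8 by ring.
  lra.
have r2 : 0 < rho ^+ 2 by apply: exprn_gt0.
split.
- exact: C1.
- move=> he.
  have h8 : eta * rho ^+ 2 <= 8 by rewrite -ler_pdivlMr.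
  have : 0 <= eta * (1 - eta * rho ^+ 2 / 8) * N.
    by apply: mulr_ge0 => //; apply: mulr_ge0 => //; lra.
  move: C1; rewrite -/N; lra.
- move=> he.
  have h4 : eta * rho ^+ 2 <= 4 by rewrite -ler_pdivlMr.
  have : eta / 2 * N <= eta * (1 - eta * rho ^+ 2 / 8) * N.
    apply: ler_wpM2r => //; apply: ler_wpM2l => //; lra.
  move: C1; rewrite -/N; lra.
Qed.
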